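(* Let $\mathcal{A}\text{-Sch}$ be the category of $\mathcal{A}$-schemes over the algebraic system of rings, and let $\mathbf{LRCoh}$ be the category of locally ringed spaces whose underlying space is coherent, with morphisms the morphisms of locally ringed spaces whose underlying continuous map is quasi-compact. Then for every $\mathcal{A}$-scheme $(X,\mathcal{O}_X,\beta_X)$, the ringed space $(X,\mathcal{O}_X)$ is locally ringed, every morphism of $\mathcal{A}$-schemes is a morphism of locally ringed spaces, so $(X,\mathcal{O}_X,\beta_X)\mapsto(X,\mathcal{O}_X)$ defines a functor $\mathcal{A}\text{-Sch}\to\mathbf{LRCoh}$; moreover this functor is fully faithful.
   Context: All rings are commutative with $1$. A topological space is coherent if it is sober (every irreducible closed subset has a unique generic point), quasi-compact, quasi-separated (intersections of two quasi-compact opens are quasi-compact) and has a basis of quasi-compact opens; a continuous map of coherent spaces is quasi-compact if preimages of quasi-compact opens are quasi-compact. For a coherent space $U$, $C(U)_{\mathrm{cpt}}$ is the set of closed subsets of $U$ with quasi-compact complement. For a ring $R$, $\alpha_1(R)$ is the set of finitely generated ideals of $R$ modulo the equivalence relation generated by $I\cdot I\sim I$, and $\alpha_2(a)$ denotes the class of the principal ideal $(a)$. An $\mathcal{A}$-scheme is a triple $(X,\mathcal{O}_X,\beta_X)$ where $X$ is a coherent space, $\mathcal{O}_X$ is a sheaf of rings on $X$, and $\beta_X$ (the support morphism) is a family of maps $\beta_X:\alpha_1(\mathcal{O}_X(U))\to C(U)_{\mathrm{cpt}}$ for quasi-compact open $U$, compatible with restrictions, with $\beta_X(I+J)=\beta_X(I)\cap\beta_X(J)$,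 $\beta_X(IJ)=\beta_X(I)\cup\beta_X(J)$, $\beta_X(0)=U$, $\beta_X(\mathcal{O}_X(U))=\emptyset$; it must satisfy: whenever $V\subset U$ are quasi-compact open and $a\in\mathcal{O}_X(U)$ satisfies $\beta_X(\alpha_2(a))\subset U\setminus V$, then $a|_V$ is invertible in $\mathcal{O}_X(V)$ (''restrictions reflect localizations''). A morphism $f:X\to Y$ of $\mathcal{A}$-schemes is a pair $(|f|,f^{\#})$ where $|f|$ is a quasi-compact continuous map and $f^{\#}:\mathcal{O}_Y\to|f|_*\mathcal{O}_X$ is a morphism of sheaves of rings with $\beta_X(f^{\#}(I))=|f|^{-1}(\beta_Y(I))$ for all finitely generated ideals $I$ of sections of $\mathcal{O}_Y$ over quasi-compact opens. *)

(* Defs.v *)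
From HB Require Import structures.
From mathcomp Require Import all_boot all_order all_algebra.
From mathcomp Require Import all_classical topology.
Set Implicit Arguments. Unset Strict Implicit. Unset Printing Implicit Defensive.
Import Order.TTheory GRing.Theory.
Local Open Scope classical_set_scope.
Local Open Scope ring_scope.

Definition qc_open {X : topologicalType} (U : set X) : Prop := open U /\ compact U.

Definition irreducible_set {X : topologicalType} (Z : set X) : Prop :=
  Z !=set0 /\
  forall Z1 Z2 : set X, closed Z1 -> closed Z2 -> Z `<=` Z1 `|` Z2 ->
    Z `<=` Z1 \/ Z `<=` Z2.

Definition sober_space (X : topologicalType) : Prop :=
  forall Z : set X, closed Z -> irreducible_set Z ->
    exists! x : X, Z = closure [set x].

Definition coherent_space (X : topologicalType) : Prop :=
  [/\ sober_space X,
      compact [set: X],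
      (forall U V : set X, qc_open U -> qc_open V -> compact (U `&` V)) &
      (forall (U : set X) (x : X), open U -> U x ->
         exists V : set X, [/\ qc_open V, V x & V `<=` U])].

Definition qc_map {X Y : topologicalType} (f : X -> Y) : Prop :=
  forall V : set Y, qc_open V -> compact (f @^-1` V).

(* Sections are only meaningful on open sets; all axioms are restricted to opens. *)

Record sheaf (X : topologicalType) := Sheaf {
  sec : set X -> comPzRingType;
  res : forall U V : set X, V `<=` U -> {rmorphism sec U -> sec V};
  res_id : forall (U : set X) (h : U `<=` U) (s : sec U), open U -> res h s = s;
  res_comp : forall (U V W : set X) (hVU : V `<=` U) (hWV : W `<=` V)
      (hWU : W `<=` U) (s : sec U),
      open U -> open V -> open W -> res hWV (res hVU s) = res hWU s;
  sheaf_locality : forall (U : set X) (I : Type) (V : I -> set X)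
      (hV : forall i, V i `<=` U),
      open U -> (forall i, open (V i)) -> U `<=` \bigcup_i V i ->
      forall s t : sec U, (forall i, res (hV i) s = res (hV i) t) -> s = t;
  sheaf_gluing : forall (U : set X) (I : Type) (V : I -> set X)
      (hV : forall i, V i `<=` U),
      open U -> (forall i, open (V i)) -> U `<=` \bigcup_i V i ->
      forall s : forall i, sec (V i),
      (forall i j, res (@subIsetl _ (V i) (V j)) (s i)
                   = res (@subIsetr _ (V i) (V j)) (s j)) ->
      exists t : sec U, forall i, res (hV i) t = s i
}.

Definition is_unit {R : comPzRingType} (a : R) : Prop := exists b : R, a * b = 1.

Definition ideal_of_seq {R : comPzRingType} (s : seq R) : set R :=
  [set x | exists c : 'I_(size s) -> R, x = \sum_(i < size s) c i * s`_i].

Definition fg_ideal {R : comPzRingType} (I : set R) : Prop :=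
  exists s : seq R, I = ideal_of_seq s.

Definition principal_ideal {R : comPzRingType} (a : R) : set R := ideal_of_seq [:: a].

Definition ideal_add {R : comPzRingType} (I J : set R) : set R :=
  [set x | exists a b, [/\ I a, J b & x = a + b]].

Definition ideal_mul {R : comPzRingType} (I J : set R) : set R :=
  [set x | exists (n : nat) (a b : 'I_n -> R),
     (forall i, I (a i) /\ J (b i)) /\ x = \sum_(i < n) a i * b i].

Definition ideal_ext {R S : comPzRingType} (f : R -> S) (I : set R) : set S :=
  [set y | exists (n : nat) (c : 'I_n -> S) (a : 'I_n -> R),
     (forall i, I (a i)) /\ y = \sum_(i < n) c i * f (a i)].

Definition Ccpt {X : topologicalType} (U Z : set X) : Prop :=
  [/\ Z `<=` U, open (U `\` Z) & compact (U `\` Z)].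

(* beta U : a map defined on finitely generated ideals of O(U) (encoded as subsets
   of O(U)); it descends to alpha_1(O(U)) iff it is invariant under I ~ I.I *)
Definition support_data (X : topologicalType) (O : sheaf X) :=
  forall U : set X, set (sec O U) -> set X.

Definition is_AScheme (X : topologicalType) (O : sheaf X) (beta : support_data O)
  : Prop :=
  coherent_space X /\
      (forall U I, qc_open U -> fg_ideal I -> Ccpt U (beta U I)) /\
      (forall U I, qc_open U -> fg_ideal I -> beta U (ideal_mul I I) = beta U I) /\
      (forall (U V : set X) (h : V `<=` U) I, qc_open U -> qc_open V -> fg_ideal I ->
         beta V (ideal_ext (res O h) I) = beta U I `&` V) /\
      (forall U I J, qc_open U -> fg_ideal I -> fg_ideal J ->
         beta U (ideal_add I J) = beta U I `&` beta U J) /\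
      (forall U I J, qc_open U -> fg_ideal I -> fg_ideal J ->
         beta U (ideal_mul I J) = beta U I `|` beta U J) /\
      (forall U, qc_open U -> beta U [set 0] = U) /\
      (forall U, qc_open U -> beta U [set: sec O U] = set0) /\
      (forall (U V : set X) (h : V `<=` U) (a : sec O U), qc_open U -> qc_open V ->
         beta U (principal_ideal a) `<=` U `\` V -> is_unit (res O h a)).

(* the germ of s in O_{X,x} is a unit *)
Definition germ_unit {X : topologicalType} (O : sheaf X) (x : X) (U : set X)
  (s : sec O U) : Prop :=
  exists (V : set X) (h : V `<=` U), [/\ open V, V x & is_unit (res O h s)].

(* every stalk O_{X,x} is a local ring: nonzero, and for every germ s,
   s or 1 - s is a unit *)
Definition locally_ringed {X : topologicalType} (O : sheaf X) : Prop :=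
  forall x : X,
    (forall U : set X, open U -> U x -> (1 : sec O U) <> 0) /\
    (forall (U : set X) (s : sec O U), open U -> U x ->
       germ_unit x s \/ germ_unit x (1 - s)).

(* morphism data f^# : O_Y -> f_* O_X *)
Definition sheaf_map {X Y : topologicalType} (OX : sheaf X) (OY : sheaf Y)
  (f : X -> Y) :=
  forall V : set Y, {rmorphism sec OY V -> sec OX (f @^-1` V)}.

Definition ringed_morph {X Y : topologicalType} (OX : sheaf X) (OY : sheaf Y)
  (f : X -> Y) (fs : sheaf_map OX OY f) : Prop :=
  [/\ continuous f, qc_map f &
      forall (V V' : set Y) (h : V' `<=` V) (s : sec OY V), open V -> open V' ->
        res OX ((@preimage_subset _ _ f _ _ h)) (fs V s) = fs V' (res OY h s)].

(* the induced maps on stalks O_{Y,f x} -> O_{X,x} are local homomorphisms *)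
Definition local_on_stalks {X Y : topologicalType} (OX : sheaf X) (OY : sheaf Y)
  (f : X -> Y) (fs : sheaf_map OX OY f) : Prop :=
  forall (x : X) (V : set Y) (s : sec OY V), open V -> V (f x) ->
    germ_unit x (fs V s) -> germ_unit (f x) s.

Definition A_morph_cond {X Y : topologicalType} (OX : sheaf X) (OY : sheaf Y)
  (betaX : support_data OX) (betaY : support_data OY)
  (f : X -> Y) (fs : sheaf_map OX OY f) : Prop :=
  forall (V : set Y) (I : set (sec OY V)), qc_open V -> fg_ideal I ->
    betaX (f @^-1` V) (ideal_ext (fs V) I) = f @^-1` (betaY V I).

(* Main.v *)
Require Import Defs.
From HB Require Import structures.
From mathcomp Require Import all_boot all_order all_algebra.
From mathcomp Require Import all_classical topology.
Local Open Scope classical_set_scope.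
Import GRing.Theory.
Local Open Scope ring_scope.

Lemma ideal_of_seqP (R : comPzRingType) (s : seq R) x :
  ideal_of_seq s x <-> exists c : nat -> R, x = \sum_(i < size s) c i * s`_i.
Proof.
split.
- move=> [c ->]; exists (fun k => if insub k is Some i then c i else 0).
  by apply: eq_bigr => i _; rewrite valK.
- by move=> [c ->]; exists (fun i => c i).
Qed.

Lemma ideal_of_seq_nil (R : comPzRingType) : ideal_of_seq (nil : seq R) = [set 0].
Proof.
apply/seteqP; split => x /=.
- by move=> [c ->]; rewrite big_ord0.
- by move=> ->; exists (fun _ => 0); rewrite big_ord0.
Qed.

Lemma mem_ideal_of_seq (R : comPzRingType) (s : seq R) j :
  (j < size s)%N -> ideal_of_seq s s`_j.
Proof.
move=> hj; apply/ideal_of_seqP; exists (fun k => (k == j)%:R).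
rewrite (bigD1 (Ordinal hj)) //= eqxx mul1r big1 ?addr0 // => i hi.
have -> : (val i == j) = false.
  by apply/negbTE; apply: contra hi => /eqP e; apply/eqP/val_inj.
by rewrite mul0r.
Qed.

Lemma ideal_of_seq_cons (R : comPzRingType) (a : R) s :
  ideal_of_seq (a :: s) = ideal_add (principal_ideal a) (ideal_of_seq s).
Proof.
apply/seteqP; split => x /=.
- move=> /ideal_of_seqP [c ->]; rewrite /= big_ord_recl /=.
  exists (c 0%N * a), (\sum_(i < size s) c i.+1 * s`_i); split.
  + by apply/ideal_of_seqP; exists (fun=> c 0%N); rewrite big_ord1.
  + by apply/ideal_of_seqP; exists (fun k => c k.+1).
  + by congr (_ + _); apply: eq_bigr => i _; rewrite lift0.
- move=> [b [d [/ideal_of_seqP [c1 ->] /ideal_of_seqP [c2 ->] ->]]].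
  apply/ideal_of_seqP; exists (fun k => if k is k'.+1 then c2 k' else c1 0%N).
  rewrite [RHS]big_ord_recl big_ord_recl big_ord0 addr0 /=.
  by congr (_ + _); apply: eq_bigr => i _; rewrite lift0.
Qed.

Lemma ideal_ext_seq (R S : comPzRingType) (f : {rmorphism R -> S}) (s : seq R) :
  ideal_ext f (ideal_of_seq s) = ideal_of_seq (map f s).
Proof.
apply/seteqP; split => y /=.
- move=> [n [c [a [ha ->]]]].
  have [d hd] := @boolp.choice 'I_n (nat -> R)
    (fun i d => a i = \sum_(j < size s) d j * s`_j)
    (fun i => proj1 (@ideal_of_seqP _ s (a i)) (ha i)).
  apply/ideal_of_seqP; exists (fun j => \sum_(i < n) c i * f (d i j)).
  rewrite size_map.
  under eq_bigr => i _ do rewrite hd rmorph_sum mulr_sumr.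
  rewrite exchange_big /=; apply: eq_bigr => j _.
  rewrite mulr_suml (nth_map 0) //; apply: eq_bigr => i _.
  by rewrite rmorphM mulrA.
- move=> /ideal_of_seqP [c ->].
  exists (size s), (fun j => c j), (fun j => s`_(val j)); split.
  + by move=> i; apply: mem_ideal_of_seq (ltn_ord i).
  + rewrite size_map; apply: eq_bigr => i _; by rewrite (nth_map 0).
Qed.

Lemma is_unit_rmorph (R S : comPzRingType) (f : {rmorphism R -> S}) (a : R) :
  is_unit a -> is_unit (f a).
Proof. by move=> [b hb]; exists (f b); rewrite -rmorphM hb rmorph1. Qed.

Lemma germ_res (X : topologicalType) (O : sheaf X) (U W : set X) (h : W `<=` U)
  (s : sec O U) x : open U -> open W -> germ_unit x (res O h s) -> germ_unit x s.
Proof.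
move=> oU oW [V [hV [oV Vx u]]]; exists V, (subset_trans hV h); split => //.
by rewrite -(res_comp h hV).
Qed.

Lemma fg_principal (R : comPzRingType) (a : R) : fg_ideal (principal_ideal a).
Proof. by exists [:: a]. Qed.

Lemma fg_seq (R : comPzRingType) (s : seq R) : fg_ideal (ideal_of_seq s).
Proof. by exists s. Qed.

Lemma charP (X : topologicalType) (O : sheaf X) (beta : support_data O)
  (H : is_AScheme beta) U (a : sec O U) x : qc_open U ->
  beta U (principal_ideal a) x <-> U x /\ ~ germ_unit x a.
Proof.
case: H => [[_ _ _ basis] [hC [_ [hres [_ [_ [h0 [hT hrefl]]]]]]]] qU.
have [sub oD cD] := hC U _ qU (fg_principal _ a).
split.
- move=> bx; split; first exact: sub.
  move=> [V [hV [oV Vx [b hb]]]].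
  have [W [qW Wx WV]] := basis V x oV Vx.
  have hWU := subset_trans WV hV.
  have e := hres U W hWU (principal_ideal a) qU qW (fg_principal _ a).
  have eT : ideal_ext (res O hWU) (principal_ideal a) = setT.
    apply/seteqP; split => // y _.
    exists 1%N, (fun _ => y * res O WV b), (fun _ => a); split.
      by move=> _; apply: (@mem_ideal_of_seq _ [:: a] 0%N).
    have oW := qW.1; have oU := qU.1.
    rewrite big_ord1 -(res_comp hV WV hWU) //.
    by rewrite -mulrA -rmorphM [b * _]mulrC hb rmorph1 mulr1.
  rewrite eT hT // in e.
  have : (beta U (principal_ideal a) `&` W) x by [].
  by rewrite -e.
- move=> [Ux ng]; apply: boolp.contrapT => nb; apply: ng.
  pose W := U `\` beta U (principal_ideal a).
  have hWU : W `<=` U by move=> y [].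
  have qW : qc_open W by [].
  have u := hrefl U W hWU a qU qW (fun y hy => conj (sub y hy) (fun wy : W y => wy.2 hy)).
  by exists W, hWU; split.
Qed.

Lemma genchar (X : topologicalType) (O : sheaf X) (beta : support_data O)
  (H : is_AScheme beta) U (s : seq (sec O U)) x : qc_open U ->
  beta U (ideal_of_seq s) x <->
  U x /\ (forall i, (i < size s)%N -> ~ germ_unit x s`_i).
Proof.
move=> qU.
have [_ [_ [_ [_ [hadd [_ [h0 _]]]]]]] := H.
elim: s => [|a s IH].
- rewrite ideal_of_seq_nil h0 //; split; [by move=> Ux; split | by case].
- rewrite ideal_of_seq_cons hadd //; try exact: fg_principal; try exact: fg_seq.
  split.
  + move=> [/(@charP _ _ _ H _ _ _ qU) [Ux na] /IH [_ ns]]; split => // -[|i] /= hi //.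
    exact: ns.
  + move=> [Ux n]; split.
    * by apply/(@charP _ _ _ H _ _ _ qU); split => //; exact: (n 0%N).
    * by apply/IH; split => // i hi; exact: (n i.+1).
Qed.

Lemma locally_ringed_of (X : topologicalType) (O : sheaf X) (beta : support_data O) :
  is_AScheme beta -> locally_ringed O.
Proof.
move=> H.
have [[_ _ _ basis] [hC [_ [hres [hadd [_ [h0 [hT hrefl]]]]]]]] := H.
move=> x; split.
- move=> U oU Ux e.
  have [W [qW Wx WU]] := basis U x oU Ux.
  have e' : (1 : sec O W) = 0 by rewrite -(rmorph1 (res O WU)) e rmorph0.
  have eS : [set (0 : sec O W)] = setT.
    by apply/seteqP; split => // y _ /=; rewrite -[y]mulr1 e' mulr0.
  have := h0 W qW; rewrite eS hT // => eW.
  by rewrite -eW in Wx.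
- move=> U s oU Ux.
  have [W [qW Wx WU]] := basis U x oU Ux.
  have oW := qW.1.
  pose a := res O WU s.
  have eT : ideal_add (principal_ideal a) (principal_ideal (1 - a)) = setT.
    apply/seteqP; split => // y _.
    exists (y * a), (y * (1 - a)); split.
    + by apply/ideal_of_seqP; exists (fun=> y); rewrite big_ord1.
    + by apply/ideal_of_seqP; exists (fun=> y); rewrite big_ord1.
    + by rewrite -mulrDr addrC subrK mulr1.
  have := hadd W _ _ qW (fg_principal _ a) (fg_principal _ (1 - a)).
  rewrite eT hT // => e0.
  have : ~ (beta W (principal_ideal a) `&` beta W (principal_ideal (1 - a))) x.
    by rewrite -e0.
  move=> nI.
  have [ba|nba] := boolp.pselect (beta W (principal_ideal a) x).
  + right.
    have nb : ~ beta W (principal_ideal (1 - a)) x by move=> bb; apply: nI.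
    have : germ_unit x (1 - a).
      apply: boolp.contrapT => ng; apply: nb; apply/(@charP _ _ _ H _ _ _ qW); split => //.
    rewrite /a -(rmorph1 (res O WU)) -rmorphB => g.
    exact: germ_res oU oW g.
  + left.
    have : germ_unit x a.
      apply: boolp.contrapT => ng; apply: nba; apply/(@charP _ _ _ H _ _ _ qW); split => //.
    exact: germ_res oU oW.
Qed.

Lemma germ_fwd (X Y : topologicalType) (OX : sheaf X) (OY : sheaf Y)
  (f : X -> Y) (fs : sheaf_map OX OY f) (Hm : ringed_morph fs) V (a : sec OY V) x :
  open V -> germ_unit (f x) a -> germ_unit x (fs V a).
Proof.
case: Hm => cf _ hcomp oV [V' [h [oV' V'fx u]]].
exists (f @^-1` V'), (@preimage_subset _ _ f _ _ h); split => //.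
  exact: (proj1 (continuousP f) cf).
by rewrite hcomp //; apply: is_unit_rmorph.
Qed.

Theorem proposition2p1 :
  (forall (X : topologicalType) (O : sheaf X) (beta : support_data O),
      is_AScheme beta -> locally_ringed O) /\
  (forall (X Y : topologicalType) (OX : sheaf X) (OY : sheaf Y)
      (betaX : support_data OX) (betaY : support_data OY)
      (f : X -> Y) (fs : sheaf_map OX OY f),
      is_AScheme betaX -> is_AScheme betaY -> ringed_morph fs ->
      (A_morph_cond betaX betaY fs <-> local_on_stalks fs)).
Proof.
split; first exact: locally_ringed_of.
move=> X Y OX OY betaX betaY f fs HX HY Hm.
have [cf qcf hcomp] := Hm.
have oPre : forall V, open V -> open (f @^-1` V) := proj1 (continuousP f) cf.
split.
- move=> HA x V s oV Vfx g.
  have [[_ _ _ basisY] _] := HY.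
  have [V0 [qV0 V0fx V0V]] := basisY V (f x) oV Vfx.
  have oV0 := qV0.1.
  pose s0 := res OY V0V s.
  have oP0 := oPre _ oV0.
  have oP := oPre _ oV.
  have qP0 : qc_open (f @^-1` V0) := conj oP0 (qcf _ qV0).
  have g0 : germ_unit x (fs V0 s0).
    case: g => W [hW [oW Wx u]].
    pose W' := W `&` f @^-1` V0.
    have hW' : W' `<=` f @^-1` V0 by move=> y [].
    have hW'W : W' `<=` W by move=> y [].
    have oW' : open W' by apply: openI.
    exists W', hW'; split => //.
    rewrite /s0 -hcomp //.
    rewrite (res_comp _ _ (subset_trans hW'W hW)) //.
    rewrite -(res_comp hW hW'W) //.
    exact: is_unit_rmorph.
  have e := HA V0 (principal_ideal s0) qV0 (fg_principal _ s0).
  rewrite /principal_ideal ideal_ext_seq /= in e.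
  have nb : ~ betaX (f @^-1` V0) (ideal_of_seq [:: fs V0 s0]) x.
    by move/(@charP _ _ _ HX _ _ _ qP0) => [_ []].
  have nb' : ~ betaY V0 (principal_ideal s0) (f x) by move: nb; rewrite e.
  have gs0 : germ_unit (f x) s0.
    apply: boolp.contrapT => ng; apply: nb'.
    by apply/(@charP _ _ _ HY _ _ _ qV0).
  exact: germ_res oV oV0 gs0.
- move=> HL V I qV [s ->].
  have oP := oPre _ qV.1.
  have qP : qc_open (f @^-1` V) := conj oP (qcf _ qV).
  rewrite ideal_ext_seq.
  apply/seteqP; split => x /=.
  + move/(@genchar _ _ _ HX _ _ _ qP) => [Vfx n].
    apply/(@genchar _ _ _ HY _ _ _ qV); split => // i hi g.
    apply: (n i); first by rewrite size_map.
    rewrite (nth_map 0) //.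
    exact: (@germ_fwd _ _ _ _ _ _ Hm _ _ _ qV.1 g).
  + move/(@genchar _ _ _ HY _ _ _ qV) => [Vfx n].
    apply/(@genchar _ _ _ HX _ _ _ qP); split => // i; rewrite size_map => hi g.
    apply: (n i hi); apply: (HL x V _ qV.1 Vfx).
    by rewrite -(nth_map 0 0).
Qed.
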